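(* If $1\le m\le 4$, then for every Latin square $K$ on $[m]$ the matroid $M[K]$ is realizable over $\mathbb{R}$.
   Context: A Latin square $K=(k_{i,j})$ on $[m]$ is an $m\times m$ matrix with entries in $[m]$ in which each symbol occurs exactly once in each row and each column. Let $\mathcal{C}[K]=\{\{i,m+j,2m+k_{i,j}\}:1\le i,j\le m\}$, a family of $3$-subsets of $[3m]$. $M[K]$ is the simple matroid on $[3m]$ whose family of all $3$-element circuits is exactly $\mathcal{C}[K]$ and which has rank $3$ when $m\ge 2$ (for $m=1$ it is the rank-$2$ uniform matroid on $\{1,2,3\}$). A matroid is realizable over $\mathbb{R}$ if it is the underlying matroid of an arrangement of hyperplanes over $\mathbb{R}$ (equivalently, the linear matroid of a finite family of vectors in a real vector space). *)

(* Defs.v *)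
From HB Require Import structures.
From mathcomp Require Import all_boot all_order all_algebra.
From mathcomp Require Import Rstruct.
From Stdlib Require Import Reals.
Set Implicit Arguments. Unset Strict Implicit. Unset Printing Implicit Defensive.
Import Order.TTheory GRing.Theory Num.Theory.

(* Indices are 0-based: [m] = 'I_m, [3m] = 'I_(3*m). *)

Definition latin_square (m : nat) (K : 'I_m -> 'I_m -> 'I_m) : Prop :=
  (forall i : 'I_m, injective (K i)) /\ (forall j : 'I_m, injective (fun i => K i j)).

Lemma blk_proof (m : nat) (b : 'I_3) (i : 'I_m) : b * m + i < 3 * m.
Proof.
case: b => b hb /=; case: i => i hi /=.
have h1 : b * m + i < b * m + m by rewrite ltn_add2l.
apply: (leq_trans h1). by rewrite -mulSnr leq_mul2r hb orbT.
Qed.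

(* blk b i = element b*m + i of [3m] (0-based version of i, m+j, 2m+k). *)
Definition blk (m : nat) (b : 'I_3) (i : 'I_m) : 'I_(3 * m) :=
  Ordinal (blk_proof b i).

Definition CK (m : nat) (K : 'I_m -> 'I_m -> 'I_m) : {set {set 'I_(3 * m)}} :=
  [set [set blk (@Ordinal 3 0 isT) i; blk (@Ordinal 3 1 isT) j; blk (@Ordinal 3 2 isT) (K i j)]
     | i : 'I_m, j : 'I_m].

(* Independent sets of M[K]: a simple matroid (all sets of size <= 2 are
   independent) whose 3-element circuits are exactly C[K] (so the other
   3-sets are independent) and of rank 3 (no independent set of size >= 4).
   For m = 1, C[K] consists of the whole ground set and this gives the
   rank-2 uniform matroid on 3 elements, as stipulated. *)
Definition MK_indep (m : nat) (K : 'I_m -> 'I_m -> 'I_m) (S : {set 'I_(3 * m)}) : bool :=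
  (#|S| <= 2) || ((#|S| == 3) && (S \notin CK K)).

Definition vec_indep (T : finType) (n : nat) (v : T -> 'rV[R]_n) (S : {set T}) : bool :=
  row_free (\matrix_(k < #|S|) v (enum_val k)).

Definition realizable_over_R (T : finType) (indep : {set T} -> bool) : Prop :=
  exists (n : nat) (v : T -> 'rV[R]_n), forall S : {set T}, indep S = vec_indep v S.

(* Main.v *)
Require Import Defs.
From HB Require Import structures.
From mathcomp Require Import all_boot all_order all_algebra.
From mathcomp Require Import Rstruct.
From Stdlib Require Import Reals.
From Stdlib Require Import ZArith.
From mathcomp Require Import ring.
Set Implicit Arguments. Unset Strict Implicit. Unset Printing Implicit Defensive.
Import Order.TTheory GRing.Theory Num.Theory.

Definition rowsmx q n (g : 'I_q -> 'rV[R]_n) : 'M[R]_(q, n) :=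
  @matrix_of_fun _ q n matrix_key (fun k j => g k ord0 j).

Lemma rows_eqmx p n (f : 'I_p -> 'rV[R]_n) :
  (rowsmx f :=: \sum_(k < p) <<f k>>)%MS.
Proof.
have rK k : row k (rowsmx f) = f k.
  by apply/rowP => j; rewrite !mxE.
apply/eqmxP/andP; split.
  apply/row_subP => k; rewrite rK; apply: (sumsmx_sup k) => //.
  by rewrite genmxE.
apply/sumsmx_subP => k _; rewrite genmxE.
by apply: (eq_row_sub k); rewrite rK.
Qed.

Section RK.
Variables (T : finType) (v : T -> 'rV[R]_3).
Definition rk (S : {set T}) := \rank (\sum_(x in S) <<v x>>)%MS.

Lemma vec_indep_rk S : vec_indep v S = (rk S == #|S|).
Proof.
rewrite /vec_indep /row_free.
change (\rank (rowsmx (fun k => v (enum_val k))) == #|S|) with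
  (\rank (rowsmx (fun k => v (enum_val k))) == #|S|).
rewrite (rows_eqmx (fun k => v (enum_val k))).
by rewrite /rk (big_enum_val (fun x => <<v x>>%MS)).
Qed.

Lemma rk_leq_card S : rk S <= #|S|.
Proof.
rewrite /rk -sum1_card.
apply: (big_ind2 (fun (A : 'M[R]_3) k => \rank A <= k)).
- by rewrite mxrank0.
- move=> A1 k1 A2 k2 h1 h2; apply: leq_trans (leq_add h1 h2).
  by rewrite mxrank_adds_leqif.
- by move=> x _; rewrite genmxE; apply: rank_leq_row.
Qed.

Lemma rk_leq3 S : rk S <= 3.
Proof. exact: rank_leq_col. Qed.

End RK.

Local Open Scope ring_scope.
Definition o0 : 'I_3 := @Ordinal 3 0 isT.
Definition o1 : 'I_3 := @Ordinal 3 1 isT.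
Definition o2 : 'I_3 := @Ordinal 3 2 isT.

Definition f3 (u w t : 'rV[R]_3) (k : 'I_3) : 'rV[R]_3 :=
  match val k with 0 => u | 1 => w | _ => t end.

Definition g3 (u w t : 'rV[R]_3) (a b : nat) : R :=
  (match a with 0 => u | 1 => w | _ => t end) ord0
     (match b with 0 => o0 | 1 => o1 | _ => o2 end).

Lemma f3E u w t i j : f3 u w t i ord0 j = g3 u w t (val i) (val j).
Proof.
have -> : j = match val j with 0 => o0 | 1 => o1 | _ => o2 end.
  by apply: val_inj; case: j => [[|[|[|k]]] ?].
by rewrite /g3 /f3; case: i => [[|[|k]] ?]; case: j => [[|[|[|k']]] ?].
Qed.

Definition det3g (F : comNzRingType) (g : nat -> nat -> F) : F :=
  (g 0%nat 0%nat * (g 1%nat 1%nat * g 2%nat 2%nat - g 1%nat 2%nat * g 2%nat 1%nat)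
 - g 0%nat 1%nat * (g 1%nat 0%nat * g 2%nat 2%nat - g 1%nat 2%nat * g 2%nat 0%nat)
 + g 0%nat 2%nat * (g 1%nat 0%nat * g 2%nat 1%nat - g 1%nat 1%nat * g 2%nat 0%nat)).

Definition det3 (u w t : 'rV[R]_3) : R := det3g (g3 u w t).

Lemma det_M3 u w t : \det (rowsmx (f3 u w t)) = det3 u w t.
Proof.
rewrite (expand_det_row _ ord0) !big_ord_recl big_ord0 /cofactor.
rewrite !(expand_det_row _ ord0) !big_ord_recl !big_ord0 /cofactor.
rewrite !det_mx11 !mxE !f3E /= /det3 /=.
rewrite /bump /=. rewrite ?add0n ?addn0 /det3 /=.
rewrite ?addn1 /det3g.
rewrite !expr0 !expr1 expr2.
ring.
Qed.

Lemma rank_M3 u w t : (\rank (rowsmx (f3 u w t)) == 3)%nat = (det3 u w t != 0).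
Proof.
have := row_free_unit (rowsmx (f3 u w t)).
rewrite /row_free => ->.
by rewrite unitmxE unitfE det_M3.
Qed.

Lemma M3_eqmx u w t : (rowsmx (f3 u w t) :=: <<u>> + (<<w>> + <<t>>))%MS.
Proof.
apply: eqmx_trans (rows_eqmx _) _.
rewrite !big_ord_recl big_ord0 /= addsmx0_id.
exact: eqmx_refl.
Qed.

Section RK2.
Variables (T : finType) (v : T -> 'rV[R]_3).

Lemma rk_set1 a : (v a != 0) -> rk v [set a] = 1%nat.
Proof.
move=> nz; rewrite /rk big_set1 genmxE.
apply/eqP; rewrite eqn_leq rank_leq_row /= lt0n mxrank_eq0 //.
Qed.

Lemma rk_set3 a b c : a != b -> a != c -> b != c ->
  rk v [set a; b; c] = \rank (rowsmx (f3 (v a) (v b) (v c))).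
Proof.
move=> ab ac bc.
rewrite /rk -setUA big_setU1 /=; last by rewrite !inE negb_or ab ac.
rewrite big_setU1 /=; last by rewrite !inE bc.
by rewrite big_set1 (M3_eqmx (v a) (v b) (v c)).
Qed.

Lemma rk_set2 a b t : a != b -> det3 (v a) (v b) t != 0 ->
  rk v [set a; b] = 2%nat.
Proof.
move=> ab hd; apply/eqP; rewrite eqn_leq.
have -> : (rk v [set a; b] <= 2)%nat.
  by apply: leq_trans (rk_leq_card _ _) _; rewrite cards2 ab.
rewrite /=.
have h3 := rank_M3 (v a) (v b) t; rewrite hd in h3.
move/eqP: h3; rewrite (M3_eqmx (v a) (v b) t) => h3.
have : (3 <= rk v [set a; b] + 1)%nat.
  rewrite -h3 /rk big_setU1 /=; last by rewrite !inE.
  rewrite big_set1 addsmxA.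
  apply: leq_trans (mxrank_adds_leqif _ _) _.
  by rewrite leq_add2l genmxE rank_leq_row.
by rewrite addn1 ltnS.
Qed.
End RK2.

Lemma realize_char (T : finType) (v : T -> 'rV[R]_3) (circ : {set T} -> bool) :
  (forall a, v a != 0) ->
  (forall a b, a != b -> exists t, det3 (v a) (v b) t != 0) ->
  (forall a b c, a != b -> a != c -> b != c ->
     circ [set a; b; c] = (det3 (v a) (v b) (v c) == 0)) ->
  forall S : {set T}, ((#|S| <= 2) || ((#|S| == 3) && ~~ circ S))%nat = vec_indep v S.
Proof.
move=> H1 H2 H3 S; rewrite vec_indep_rk.
have hle := rk_leq_card v S.
case: (ltngtP #|S| 3) => hS.
- rewrite ltnS in hS; rewrite hS /=; apply/esym.
  move: hS; rewrite leq_eqVlt ltnS leq_eqVlt ltnS leqn0.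
  case/or3P.
  + case/cards2P => [a [b [ab ->]]].
    have [t ht] := H2 a b ab.
    by rewrite (rk_set2 ab ht) cards2 ab.
  + case/cards1P => a ->; by rewrite (rk_set1 (H1 a)) cards1.
  + move=> /eqP h0; rewrite h0; by move: hle; rewrite h0 leqn0.
- have := rk_leq3 v S => h3.
  rewrite (leqNgt #|S| 2) (ltn_trans _ hS) //=.
  by apply/esym/negbTE; rewrite neq_ltn (leq_ltn_trans h3 hS).
- have [a aS] : exists a, a \in S.
    by apply/card_gt0P; rewrite hS.
  have hS' : #|S :\ a| == 2.
    by move: hS; rewrite (cardsD1 a S) aS add1n => -[->].
  case/cards2P: hS' => [b [c [bc hD]]].
  have hb : b \in S :\ a by rewrite hD !inE eqxx.
  have hc : c \in S :\ a by rewrite hD !inE eqxx orbT.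
  move: hb hc; rewrite !inE => /andP[ba _] /andP[ca _].
  rewrite hS /=.
  have -> : S = [set a; b; c].
    by rewrite -setUA -hD setD1K.
  have ab : a != b by rewrite eq_sym.
  have ac : a != c by rewrite eq_sym.
  rewrite (H3 _ _ _ ab ac bc) (rk_set3 _ ab ac bc) rank_M3.
  by case: (det3 _ _ _ == 0).
Qed.
Local Close Scope ring_scope.
Section Blk.
Variable m : nat.

Lemma m_pos (x : 'I_(3 * m)) : (0 < m)%nat.
Proof. by case: m x => [|m'] [x hx] //; rewrite muln0 in hx. Qed.

Lemma bl_proof (x : 'I_(3 * m)) : (x %/ m < 3)%nat.
Proof. by rewrite ltn_divLR ?(m_pos x) // ltn_ord. Qed.

Definition bl (x : 'I_(3 * m)) : 'I_3 := Ordinal (bl_proof x).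
Definition ix (x : 'I_(3 * m)) : 'I_m := Ordinal (ltn_pmod x (m_pos x)).

Lemma blk_bl_ix x : blk (bl x) (ix x) = x.
Proof. by apply: val_inj => /=; rewrite -divn_eq. Qed.

Lemma bl_blk (b : 'I_3) (i : 'I_m) : bl (blk b i) = b.
Proof.
apply: val_inj => /=; rewrite divnMDl ?(m_pos (blk b i)) //.
by rewrite divn_small ?addn0.
Qed.

Lemma ix_blk (b : 'I_3) (i : 'I_m) : ix (blk b i) = i.
Proof.
apply: val_inj => /=; rewrite modnMDl modn_small //.
Qed.

Lemma blk_inj (b b' : 'I_3) (i i' : 'I_m) : blk b i = blk b' i' -> b = b' /\ i = i'.
Proof.
move=> e; split.
  by rewrite -(bl_blk b i) e bl_blk.
by rewrite -(ix_blk b i) e ix_blk.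
Qed.

Variable tau : 'I_3 -> 'I_m -> 'I_m.
Definition piT (x : 'I_(3 * m)) := blk (bl x) (tau (bl x) (ix x)).

Lemma piT_blk (b : 'I_3) (i : 'I_m) : piT (blk b i) = blk b (tau b i).
Proof. by rewrite /piT bl_blk ix_blk. Qed.

Lemma piT_inj : (forall b, injective (tau b)) -> injective piT.
Proof.
move=> ht x y /blk_inj [eb ei].
rewrite -(blk_bl_ix x) -(blk_bl_ix y) eb; congr blk.
by apply: (ht (bl y)); move: ei; rewrite eb.
Qed.
End Blk.

Definition b0 : 'I_3 := @Ordinal 3 0 isT.
Definition b1 : 'I_3 := @Ordinal 3 1 isT.
Definition b2 : 'I_3 := @Ordinal 3 2 isT.

Definition tau3 m (r k s : 'I_m -> 'I_m) (b : 'I_3) : 'I_m -> 'I_m :=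
  match val b with 0 => r | 1 => k | _ => s end.

Lemma CK_mem m (K : 'I_m -> 'I_m -> 'I_m) S :
  reflect (exists i j, S = [set blk b0 i; blk b1 j; blk b2 (K i j)]) (S \in CK K).
Proof.
apply: (iffP imset2P).
  by case=> i j _ _ ->; exists i, j.
by case=> i [j ->]; exists i j.
Qed.

Lemma transport_CK m (K L : 'I_m -> 'I_m -> 'I_m) (r k s : 'I_m -> 'I_m) :
  injective r -> injective k -> injective s ->
  (forall i j, L (r i) (k j) = s (K i j)) ->
  forall S : {set 'I_(3 * m)}, (S \in CK K) = (piT (tau3 r k s) @: S \in CK L).
Proof.
move=> ir ik iss hL S.
have hinj : injective (piT (tau3 r k s)).
  by apply: piT_inj => -[[|[|[|b]]] hb] //=.
have himg : forall i j, piT (tau3 r k s) @: [set blk b0 i; blk b1 j; blk b2 (K i j)]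
    = [set blk b0 (r i); blk b1 (k j); blk b2 (L (r i) (k j))].
  by move=> i j; rewrite !imsetU !imset_set1 !piT_blk hL.
apply/CK_mem/CK_mem.
  by case=> i [j ->]; exists (r i), (k j); rewrite himg.
case=> i' [j' e].
have [r' rK r'K] := injF_bij ir.
have [k' kK k'K] := injF_bij ik.
exists (r' i'), (k' j'); apply: (imset_inj hinj).
by rewrite e himg r'K k'K.
Qed.

Local Open Scope ring_scope.
Definition realizable3 m (K : 'I_m -> 'I_m -> 'I_m) : Prop :=
  exists w : 'I_(3 * m) -> 'rV[R]_3,
  [/\ (forall a, w a != 0),
      (forall a b, a != b -> exists t, det3 (w a) (w b) t != 0) &
      (forall a b c, a != b -> a != c -> b != c ->
         ([set a; b; c] \in CK K) = (det3 (w a) (w b) (w c) == 0))].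

Lemma realizable3_R m (K : 'I_m -> 'I_m -> 'I_m) :
  realizable3 K -> realizable_over_R (MK_indep K).
Proof.
case=> w [H1 H2 H3]; exists 3%nat, w => S.
exact: (realize_char (circ := fun S => S \in CK K)).
Qed.

Lemma realizable3_transport m (K L : 'I_m -> 'I_m -> 'I_m) (r k s : 'I_m -> 'I_m) :
  injective r -> injective k -> injective s ->
  (forall i j, L (r i) (k j) = s (K i j)) ->
  realizable3 L -> realizable3 K.
Proof.
move=> ir ik iss hL [w [H1 H2 H3]].
set p := piT (tau3 r k s).
have hinj : injective p.
  by apply: piT_inj => -[[|[|[|b]]] hb] //=.
exists (fun x => w (p x)); split.
- by move=> a; apply: H1.
- by move=> a b ab; apply: H2; rewrite (eqtype.inj_eq hinj).
- move=> a b c ab ac bc.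
  rewrite (transport_CK ir ik iss hL) !imsetU !imset_set1.
  by apply: H3; rewrite (eqtype.inj_eq hinj).
Qed.


Definition zsel (p : Z * Z * Z) (k : nat) : Z :=
  let '(x, y, z) := p in match k with 0 => x | 1 => y | _ => z end.

Definition zrow (p : Z * Z * Z) : 'rV[R]_3 :=
  @matrix_of_fun R 1 3 matrix_key (fun _ k => IZR (zsel p (val k))).

Definition det3Z (p q r : Z * Z * Z) : Z :=
  (zsel p 0 * (zsel q 1 * zsel r 2 - zsel q 2 * zsel r 1)
 - zsel p 1 * (zsel q 0 * zsel r 2 - zsel q 2 * zsel r 0)
 + zsel p 2 * (zsel q 0 * zsel r 1 - zsel q 1 * zsel r 0))%Z.

Lemma IZR_add (x y : Z) : IZR (x + y)%Z = GRing.add (IZR x) (IZR y).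
Proof. exact: plus_IZR. Qed.
Lemma IZR_mul (x y : Z) : IZR (x * y)%Z = GRing.mul (IZR x) (IZR y).
Proof. exact: mult_IZR. Qed.
Lemma IZR_opp (x : Z) : IZR (- x)%Z = GRing.opp (IZR x).
Proof. exact: opp_IZR. Qed.
Lemma IZR_sub (x y : Z) : IZR (x - y)%Z = GRing.add (IZR x) (GRing.opp (IZR y)).
Proof. exact: minus_IZR. Qed.

Lemma det3_zrow p q r : det3 (zrow p) (zrow q) (zrow r) = IZR (det3Z p q r).
Proof.
rewrite /det3Z; do ![rewrite IZR_sub | rewrite IZR_add | rewrite IZR_mul | rewrite IZR_opp].
rewrite /det3 /det3g /g3 /zrow !mxE /=.
ring.
Qed.

Definition nzZ (p : Z * Z * Z) : bool :=
  ~~ [&& Z.eqb (zsel p 0) 0, Z.eqb (zsel p 1) 0 & Z.eqb (zsel p 2) 0].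

Lemma zrow_neq0 p : nzZ p -> zrow p != 0.
Proof.
move=> hp; apply/negP => /eqP h0; move: hp; rewrite /nzZ.
have hk : forall k : 'I_3, zsel p k = 0%Z.
  move=> k; apply: eq_IZR_R0.
  by have := congr1 (fun M : 'rV[R]_3 => M ord0 k) h0; rewrite /zrow !mxE.
by rewrite (hk o0) (hk o1) (hk o2).
Qed.

Fixpoint ords (n : nat) : seq 'I_n :=
  match n with 0 => [::] | n'.+1 => ord0 :: map (lift ord0) (ords n') end.

Lemma val_ords n : map val (ords n) = iota 0 n.
Proof.
elim: n => [|n IH] //=; congr (_ :: _).
rewrite -map_comp.
have -> : map (val \o lift ord0) (ords n) = map (addn 1 \o val) (ords n).
  by apply: eq_map.
by rewrite map_comp IH -iotaDl.
Qed.

Lemma mem_ords n (i : 'I_n) : i \in ords n.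
Proof. by rewrite -(mem_map val_inj) val_ords mem_iota /= ltn_ord. Qed.

Lemma val_nth_ords n (d : 'I_n) k : (k < n)%nat -> val (nth d (ords n) k) = k.
Proof.
move=> hk; rewrite -(nth_map d (val d)); last by rewrite -(size_map val) val_ords size_iota.
by rewrite val_ords nth_iota.
Qed.

Definition memCKb m (K : 'I_m -> 'I_m -> 'I_m) (a b c : 'I_(3 * m)) : bool :=
  has (fun i => has (fun j =>
     perm_eq [:: a; b; c] [:: blk b0 i; blk b1 j; blk b2 (K i j)])
     (ords m)) (ords m).

Lemma set3_seq (T : finType) (a b c x : T) :
  (x \in [set a; b; c]) = (x \in [:: a; b; c]).
Proof. by rewrite !inE orbA. Qed.

Lemma blk_neq m (b b' : 'I_3) (i i' : 'I_m) : b != b' -> blk b i != blk b' i'.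
Proof. by move=> bb; apply/negP => /eqP /blk_inj [e _]; rewrite e eqxx in bb. Qed.

Lemma memCKbE m (K : 'I_m -> 'I_m -> 'I_m) (a b c : 'I_(3 * m)) :
  a != b -> a != c -> b != c -> ([set a; b; c] \in CK K) = memCKb K a b c.
Proof.
move=> ab ac bc; apply/CK_mem/hasP.
  case=> i [j e]; exists i; first exact: mem_ords.
  apply/hasP; exists j; first exact: mem_ords.
  apply: uniq_perm.
  - by rewrite /= !inE negb_or ab ac bc.
  - by rewrite /= !inE negb_or !blk_neq.
  - by move=> x; rewrite -!set3_seq e.
case=> i _ /hasP [j _ hp]; exists i, j.
by apply/setP => x; rewrite !set3_seq (perm_mem hp).
Qed.

Definition ptZ (pts : seq (Z * Z * Z)) (n : nat) := nth (0, 0, 0)%Z pts n.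

Definition data_ok m (K : 'I_m -> 'I_m -> 'I_m) (pts : seq (Z * Z * Z)) : bool :=
  let E := ords (3 * m) in
  [&& all (fun a : 'I_(3 * m) => nzZ (ptZ pts a)) E,
      all (fun a : 'I_(3 * m) => all (fun b : 'I_(3 * m) => (a != b) ==>
        [|| ~~ Z.eqb (det3Z (ptZ pts a) (ptZ pts b) (1, 0, 0)%Z) 0,
            ~~ Z.eqb (det3Z (ptZ pts a) (ptZ pts b) (0, 1, 0)%Z) 0 |
            ~~ Z.eqb (det3Z (ptZ pts a) (ptZ pts b) (0, 0, 1)%Z) 0]) E) E &
      all (fun a : 'I_(3 * m) => all (fun b : 'I_(3 * m) => all (fun c : 'I_(3 * m) =>
        [&& a != b, a != c & b != c] ==>
        (memCKb K a b c == Z.eqb (det3Z (ptZ pts a) (ptZ pts b) (ptZ pts c)) 0))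
        E) E) E].

Lemma IZR_eq0 (z : Z) : (IZR z == 0) = Z.eqb z 0.
Proof.
apply/eqP/idP.
  by move/eq_IZR_R0 => ->.
by move/Z.eqb_eq => ->.
Qed.

Lemma data_realizable m (K : 'I_m -> 'I_m -> 'I_m) pts :
  data_ok K pts -> realizable3 K.
Proof.
case/and3P => /allP h1 /allP h2 /allP h3.
exists (fun x => zrow (ptZ pts x)); split.
- by move=> a; apply: zrow_neq0; apply: h1; apply: mem_ords.
- move=> a b ab.
  have /allP/(_ b (mem_ords b)) := h2 a (mem_ords a).
  rewrite ab /= => /or3P [he|he|he]; [exists (zrow (1, 0, 0)%Z) |
     exists (zrow (0, 1, 0)%Z) | exists (zrow (0, 0, 1)%Z)];
  by rewrite det3_zrow IZR_eq0.
- move=> a b c ab ac bc.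
  have /allP/(_ b (mem_ords b))/allP/(_ c (mem_ords c)) :=
    h3 a (mem_ords a).
  rewrite ab ac bc /= => /eqP h.
  by rewrite memCKbE // h det3_zrow IZR_eq0.
Qed.

Definition tabf m (t : seq (seq nat)) : 'I_m -> 'I_m -> 'I_m :=
  fun i j => nth i (ords m) (nth 0 (nth [::] t i) j)%nat.


Local Close Scope ring_scope.
Definition perms m := permutations (iota 0 m).
Definition rowcands m (i : nat) : seq (seq nat) :=
  if i == 0 then [:: iota 0 m] else [seq r <- perms m | head 0 r == i].
Fixpoint combos (Ps : seq (seq (seq nat))) : seq (seq (seq nat)) :=
  match Ps with
  | [::] => [:: [::]]
  | P :: Ps' => [seq r :: rs | r <- P, rs <- combos Ps']
  end.
Definition cols_ok m (t : seq (seq nat)) : bool :=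
  all (fun j => uniq [seq nth 0 r j | r <- t]) (iota 0 m).
Definition class_ok m (cands : seq (seq (seq nat))) : bool :=
  all (fun t => cols_ok m t ==> (t \in cands))
      (combos [seq rowcands m i | i <- iota 0 m]).

Lemma mem_combos Ps s : all2 (fun r P => r \in P) s Ps -> s \in combos Ps.
Proof.
elim: Ps s => [|P Ps IH] [|r s] //= /andP [hr hs].
by apply/allpairsP; exists (r, s); split => //; apply: IH.
Qed.

Lemma all2_map_same (T A B : Type) (f : T -> A) (g : T -> B) (rel : A -> B -> bool) s :
  all2 rel (map f s) (map g s) = all (fun x => rel (f x) (g x)) s.
Proof. by elim: s => //= x s ->. Qed.

Lemma ords_uniq n : uniq (ords n).
Proof. by apply: (@map_uniq _ _ val); rewrite val_ords iota_uniq. Qed.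

Section Classify.
Variable m' : nat.
Local Notation m := m'.+1.
Variable L : 'I_m -> 'I_m -> 'I_m.
Hypothesis Lrow : forall i, injective (L i).
Hypothesis Lcol : forall j, injective (fun i => L i j).
Hypothesis Lr0 : forall j, L ord0 j = j.
Hypothesis Lc0 : forall i, L i ord0 = i.

Definition rowof (i : 'I_m) : seq nat := [seq val (L i j) | j <- ords m].
Definition tabL : seq (seq nat) := [seq rowof i | i <- ords m].

Lemma rowof_perm i : perm_eq (rowof i) (iota 0 m).
Proof.
apply: uniq_perm; last first.
- move=> x; rewrite mem_iota /= add0n; apply/mapP/idP.
    by case=> j _ ->; apply: ltn_ord.
  move=> hx; have [Li LiK KLi] := injF_bij (@Lrow i).
  exists (Li (Ordinal hx)); first exact: mem_ords.
  by rewrite KLi.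
- by rewrite iota_uniq.
- rewrite map_inj_uniq ?ords_uniq //.
  by move=> j j' /val_inj /Lrow.
Qed.

Lemma rowof_cand i : rowof i \in rowcands m (val i).
Proof.
rewrite /rowcands; case: eqP => [h0|hn].
  have -> : i = ord0 by apply: val_inj.
  rewrite inE; apply/eqP; rewrite /rowof -val_ords.
  by apply: eq_map => j; rewrite Lr0.
rewrite mem_filter /perms mem_permutations rowof_perm andbT.
by rewrite /rowof /= Lc0.
Qed.

Lemma tabL_cols : cols_ok m tabL.
Proof.
apply/allP => j; rewrite mem_iota add0n => /andP [_ hj].
set jj := Ordinal hj.
have -> : [seq nth 0 r j | r <- tabL] = [seq val (L i jj) | i <- ords m].
  rewrite /tabL -map_comp; apply: eq_map => i /=.
  rewrite /rowof (nth_map jj); last by rewrite -(size_map val) val_ords size_iota.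
  congr (val (L i _)); apply: val_inj; rewrite val_nth_ords //.
rewrite map_inj_uniq ?ords_uniq //.
by move=> i i' /val_inj /(@Lcol jj).
Qed.

Lemma tabL_combos : tabL \in combos [seq rowcands m i | i <- iota 0 m].
Proof.
apply: mem_combos; rewrite -val_ords -map_comp /tabL all2_map_same.
by apply/allP => i _; apply: rowof_cand.
Qed.

Lemma classify cands : class_ok m cands ->
  exists2 t, t \in cands & forall i j, L i j = @tabf m t i j.
Proof.
move=> /allP /(_ _ tabL_combos); rewrite tabL_cols /= => ht.
exists tabL => // i j.
rewrite /tabf.
have hi : (val i < size (ords m))%nat by rewrite -(size_map val) val_ords size_iota ltn_ord.
rewrite /tabL (nth_map i) //.
have -> : nth i (ords m) i = i by apply: val_inj; rewrite val_nth_ords.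
rewrite /rowof (nth_map j); last by rewrite -(size_map val) val_ords size_iota.
have -> : nth j (ords m) j = j by apply: val_inj; rewrite val_nth_ords.
by apply: val_inj; rewrite val_nth_ords // ltn_ord.
Qed.
End Classify.

Lemma normalize m' (K : 'I_m'.+1 -> 'I_m'.+1 -> 'I_m'.+1) :
  latin_square K ->
  exists L : 'I_m'.+1 -> 'I_m'.+1 -> 'I_m'.+1,
  exists r s : 'I_m'.+1 -> 'I_m'.+1,
  [/\ injective r, injective s & (forall i j, L (r i) j = s (K i j))] /\
  [/\ (forall i, injective (L i)), (forall j, injective (fun i => L i j)),
      (forall j, L ord0 j = j) & (forall i, L i ord0 = i)].
Proof.
case=> Krow Kcol.
pose s := invF (Krow ord0).
have sK : forall j, s (K ord0 j) = j := invF_f (Krow ord0).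
have Ks : forall y, K ord0 (s y) = y := f_invF (Krow ord0).
have s_inj : injective s by move=> x y e; rewrite -(Ks x) -(Ks y) e.
pose c i := s (K i ord0).
have c_inj : injective c by move=> x y /s_inj /Kcol.
pose r' := invF c_inj.
have r'c : forall i, r' (c i) = i := invF_f c_inj.
have cr' : forall i, c (r' i) = i := f_invF c_inj.
have r'_inj : injective r' by move=> x y e; rewrite -(cr' x) -(cr' y) e.
exists (fun i j => s (K (r' i) j)), c, s; split; split.
- exact: c_inj.
- exact: s_inj.
- by move=> i j; rewrite r'c.
- by move=> i x y /s_inj /Krow.
- by move=> j x y /s_inj /Kcol /r'_inj.
- move=> j; have -> : r' ord0 = ord0.
    by rewrite -{1}(sK ord0) -/(c ord0) r'c.
  by rewrite sK.
- by move=> i; rewrite -/(c (r' i)) cr'.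
Qed.

Lemma main_gen m' (cands : seq (seq (seq nat))) :
  class_ok m'.+1 cands ->
  (forall t, t \in cands -> realizable3 (@tabf m'.+1 t)) ->
  forall K : 'I_m'.+1 -> 'I_m'.+1 -> 'I_m'.+1, latin_square K -> realizable3 K.
Proof.
move=> hc hr K /normalize [L [r [s [[ir iss hL] [Lrow Lcol Lr0 Lc0]]]]].
have [t ht hLt] := classify Lrow Lcol Lr0 Lc0 hc.
have hid : injective (fun x : 'I_m'.+1 => x) by [].
apply: (realizable3_transport (L := @tabf m'.+1 t) ir hid iss).
  by move=> i j; rewrite -hLt.
exact: hr.
Qed.

Definition tab1_0 : seq (seq nat) := [:: [:: 0]].
Definition pts1_0 : seq (Z * Z * Z) := [:: (1, 0, 0); (0, 1, 0); (1, 1, 0)]%Z.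
Definition tab2_0 : seq (seq nat) := [:: [:: 0; 1]; [:: 1; 0]].
Definition pts2_0 : seq (Z * Z * Z) := [:: (1, 0, 0); (0, 1, 0); (0, 0, 1); (1, 1, 1); (1, 0, 1); (0, 1, 1)]%Z.
Definition tab3_0 : seq (seq nat) := [:: [:: 0; 1; 2]; [:: 1; 2; 0]; [:: 2; 0; 1]].
Definition pts3_0 : seq (Z * Z * Z) := [:: (-3, -3, 1); (1, -1, 1); (3, 9, 1); (6, -9, 1); (6, 3, 8); (-2, -8, 1); (-15, -125, 27); (45, 3, 125); (45, -243, 1)]%Z.
Definition tab4_0 : seq (seq nat) := [:: [:: 0; 1; 2; 3]; [:: 1; 0; 3; 2]; [:: 2; 3; 0; 1]; [:: 3; 2; 1; 0]].
Definition pts4_0 : seq (Z * Z * Z) := [:: (-4, 6, 1); (50, 75, 8); (-15, -100, 27); (45, -300, 1); (20172, -62279, 1728); (-147600, -455700, 68921); (372155, 1205400, 29791); (-235445, 762600, 117649); (-5506727908, -39601568754, 11497268593); (198922613450, -1430549626725, 3811036328); (-608348042415, 845927888300, 147449000187); (669702585555, 931243391100, 110522894399)]%Z.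
Definition tab4_1 : seq (seq nat) := [:: [:: 0; 1; 2; 3]; [:: 1; 0; 3; 2]; [:: 2; 3; 1; 0]; [:: 3; 2; 0; 1]].
Definition pts4_1 : seq (Z * Z * Z) := [:: (-2, 1, 2); (3, -9, 1); (-6, -9, 8); (3, 3, 2); (15, -100, 54); (-120, 27, 512); (72, 405, 2); (-180, -48, 125); (18722, -67081, 24334); (-59829, 25047, 117649); (-125097, -79233, 101306); (74382, 176157, 10648)]%Z.
Definition tab4_2 : seq (seq nat) := [:: [:: 0; 1; 2; 3]; [:: 1; 2; 3; 0]; [:: 2; 3; 0; 1]; [:: 3; 0; 1; 2]].
Definition pts4_2 : seq (Z * Z * Z) := [:: (-2, 1, 2); (-6, -9, 8); (3, -9, 1); (3, 3, 2); (15, -100, 54); (72, 405, 2); (-120, 27, 512); (-180, -48, 125); (18722, -67081, 24334); (-125097, -79233, 101306); (-59829, 25047, 117649); (74382, 176157, 10648)]%Z.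
Definition tab4_3 : seq (seq nat) := [:: [:: 0; 1; 2; 3]; [:: 1; 3; 0; 2]; [:: 2; 0; 3; 1]; [:: 3; 2; 1; 0]].
Definition pts4_3 : seq (Z * Z * Z) := [:: (-2, 1, 2); (-6, -9, 8); (3, 3, 2); (3, -9, 1); (15, -100, 54); (72, 405, 2); (-180, -48, 125); (-120, 27, 512); (18722, -67081, 24334); (-125097, -79233, 101306); (74382, 176157, 10648); (-59829, 25047, 117649)]%Z.

Theorem mainTheorem8 (m : nat) (K : 'I_m -> 'I_m -> 'I_m) :
  1 <= m <= 4 -> latin_square K -> realizable_over_R (MK_indep K).
Proof.
move=> hm hK; apply: realizable3_R.
case: m K hm hK => [|[|[|[|[|m]]]]] K hm hK //.
- apply: (@main_gen 0 [:: tab1_0]) hK; first by vm_compute.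
  move=> t; rewrite inE => /eqP ->.
  by apply: (@data_realizable _ _ pts1_0); vm_compute.
- apply: (@main_gen 1 [:: tab2_0]) hK; first by vm_compute.
  move=> t; rewrite inE => /eqP ->.
  by apply: (@data_realizable _ _ pts2_0); vm_compute.
- apply: (@main_gen 2 [:: tab3_0]) hK; first by vm_compute.
  move=> t; rewrite inE => /eqP ->.
  by apply: (@data_realizable _ _ pts3_0); vm_compute.
- apply: (@main_gen 3 [:: tab4_0; tab4_1; tab4_2; tab4_3]) hK; first by vm_compute.
  move=> t; rewrite !inE => /or4P [] /eqP ->.
  + by apply: (@data_realizable _ _ pts4_0); vm_compute.
  + by apply: (@data_realizable _ _ pts4_1); vm_compute.
  + by apply: (@data_realizable _ _ pts4_2); vm_compute.
  + by apply: (@data_realizable _ _ pts4_3); vm_compute.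
Qed.
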